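(* In the procedure of obtaining a 2-swap optimal solution for $P2\|C_{\max}$ with $n$ jobs (i.e., repeatedly replacing the current schedule by an improving 2-swap neighbor), a critical machine remains critical for at most $O(n^2)$ iterations.
   Context: Problem $P2\|C_{\max}$: $n$ jobs with processing times $p_j>0$, two identical machines. A schedule $\sigma=(M_1,M_2)$ partitions the jobs into sets processed on machines 1 and 2; loads $L_i=\sum_{j\in M_i}p_j$, makespan $\max_iL_i$; a machine whose load equals the makespan is critical. A 2-swap neighbor is obtained by choosing $k'$ jobs on one machine and $k''$ on the other with $k'+k''\le2$ and interchanging their machine assignments; it is improving if its makespan is strictly smaller. A 2-swap optimal solution has no improving 2-swap neighbor. *)

(* Defs.v *)
From HB Require Import structures.
From mathcomp Require Import all_boot all_order all_algebra.
Set Implicit Arguments. Unset Strict Implicit. Unset Printing Implicit Defensive.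
Import Order.TTheory GRing.Theory Num.Theory.
Local Open Scope ring_scope.

(* P2||Cmax.  Jobs are 'I_n with processing times p : 'I_n -> R.
   A schedule assigns each job to one of the two machines, encoded by a bool
   (machine 1 = true, machine 2 = false). *)
Definition schedule (n : nat) := {ffun 'I_n -> bool}.

Section P2.
Variables (R : realFieldType) (n : nat) (p : 'I_n -> R).

Definition load (s : schedule n) (i : bool) : R := \sum_(j | s j == i) p j.

Definition makespan (s : schedule n) : R := Num.max (load s true) (load s false).

Definition critical (s : schedule n) (i : bool) : Prop := load s i = makespan s.

Definition two_swap_neighbor (s s' : schedule n) : Prop :=
  exists A B : {set 'I_n},
    [/\ {in A, forall j, s j = true}, {in B, forall j, s j = false},
        (#|A| + #|B| <= 2)%N &
        forall j, s' j = (if j \in A :|: B then ~~ s j else s j)].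

Definition improving_two_swap (s s' : schedule n) : Prop :=
  two_swap_neighbor s s' /\ makespan s' < makespan s.

End P2.

(* Main.v *)
Require Import Defs.
From HB Require Import structures.
From mathcomp Require Import all_boot all_order all_algebra.
From mathcomp Require Import zify lra.
Import Order.TTheory GRing.Theory Num.Theory.
Local Open Scope ring_scope.

Lemma split_big (T : Type) (idx : T) (op : Monoid.com_law idx) (n : nat)
  (s s' : schedule n) (D : {set 'I_n}) (i : bool) (f : 'I_n -> T) :
  (forall j, s' j = (if j \in D then ~~ s j else s j)) ->
  op (\big[op/idx]_(j | s' j == i) f j)
     (\big[op/idx]_(j in D :&: [set j | s j == i]) f j) =
  op (\big[op/idx]_(j | s j == i) f j)
     (\big[op/idx]_(j in D :\: [set j | s j == i]) f j).
Proof.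
move=> hs.
rewrite (bigID (mem D) (fun j => s' j == i)) (bigID (mem D) (fun j => s j == i)) /=.
have -> : \big[op/idx]_(j | (s' j == i) && (j \in D)) f j =
          \big[op/idx]_(j in D :\: [set j | s j == i]) f j.
  apply: eq_bigl => j; rewrite !inE hs.
  by case: (j \in D); case: (s j); case: i.
have -> : \big[op/idx]_(j | (s' j == i) && (j \notin D)) f j =
          \big[op/idx]_(j | (s j == i) && (j \notin D)) f j.
  apply: eq_bigl => j; rewrite hs.
  by case: (j \in D); case: (s j); case: i.
have -> : \big[op/idx]_(j in D :&: [set j | s j == i]) f j =
          \big[op/idx]_(j | (s j == i) && (j \in D)) f j.
  apply: eq_bigl => j; rewrite !inE.
  by case: (j \in D); case: (s j); case: i.
set W := \big[op/idx]_(j in _ :\: _) f j.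
set Z1 := \big[op/idx]_(j | (s j == i) && (j \in D)) f j.
set Z2 := \big[op/idx]_(j | (s j == i) && (j \notin D)) f j.
by rewrite [op W Z2]Monoid.mulmC Monoid.mulmAC; congr (op _ W); apply: Monoid.mulmC.
Qed.

Section Pot.
Variables (R : realFieldType) (n : nat) (p : 'I_n -> R).

Definition rk (j : 'I_n) : nat := #|[set j' | p j' <= p j]|.
Definition Phi (i : bool) (s : schedule n) : nat := (\sum_(j | s j == i) rk j)%N.

Lemma rk_gt0 j : (0 < rk j)%N.
Proof. by apply/card_gt0P; exists j; rewrite inE. Qed.

Lemma rk_le j : (rk j <= n)%N.
Proof. by rewrite /rk -[X in (_ <= X)%N]card_ord max_card. Qed.

Lemma rk_lt a b : p b < p a -> (rk b < rk a)%N.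
Proof.
move=> hab; apply: proper_card; apply/properP; split.
  apply/subsetP => j; rewrite !inE => h; apply: le_trans h (ltW hab).
by exists a; rewrite !inE ?lexx // -ltNge.
Qed.

Lemma Phi_le i s : (Phi i s <= n * n)%N.
Proof.
apply: (@leq_trans (\sum_(j < n) rk j)%N).
  by rewrite /Phi [X in (_ <= X)%N](bigID (fun j => s j == i)) /= leq_addr.
apply: (@leq_trans (\sum_(j < n) n)%N); first by apply: leq_sum => j _; apply: rk_le.
by rewrite sum_nat_const card_ord.
Qed.

Lemma step (i : bool) (s s' : schedule n) :
  (forall j, 0 < p j) -> two_swap_neighbor s s' -> load p s' i < load p s i ->
  (Phi i s' < Phi i s)%N.
Proof.
move=> hp [A [B [_ _ hc hs]]] hl.
set D := A :|: B.
set Out := D :&: [set j | s j == i].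
set In := D :\: [set j | s j == i].
have eL := @split_big R 0 +%R _ _ _ _ i p hs.
have eP := @split_big nat 0%N addn _ _ _ _ i rk hs.
rewrite -/Out -/In in eL eP.
rewrite /load in hl; rewrite /Phi.
change (\big[+%R/0]_(j | s' j == i) p j + \big[+%R/0]_(j in Out) p j =
        \big[+%R/0]_(j | s j == i) p j + \big[+%R/0]_(j in In) p j) in eL.
change ((\sum_(j | s' j == i) rk j + \sum_(j in Out) rk j =
        \sum_(j | s j == i) rk j + \sum_(j in In) rk j)%N) in eP.
set P1 := (\sum_(j | s' j == i) rk j)%N in eP *.
set P2 := (\sum_(j | s j == i) rk j)%N in eP *.
set L1 := (\big[+%R/0]_(j | s' j == i) p j) in eL hl.
set L2 := (\big[+%R/0]_(j | s j == i) p j) in eL hl.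
have hcard : (#|Out| + #|In| <= 2)%N.
  rewrite cardsID; apply: leq_trans hc; rewrite cardsU; lia.
have [In0 | [b bIn]] := set_0Vmem In.
  rewrite In0 big_set0 in eL eP.
  have [Out0 | [a aOut]] := set_0Vmem Out.
    rewrite Out0 big_set0 in eL; lra.
  rewrite [X in (_ + X)%N = _](bigD1 a) //= in eP.
  have := rk_gt0 a; lia.
have cIn : (0 < #|In|)%N by apply/card_gt0P; exists b.
have [Out0 | [a aOut]] := set_0Vmem Out.
  rewrite Out0 big_set0 in eL.
  have : 0 <= \sum_(j in In) p j by apply: sumr_ge0 => j _; apply: ltW.
  lra.
have cOut : (0 < #|Out|)%N by apply/card_gt0P; exists a.
have /cards1P [a' Ea] : #|Out| == 1%N by apply/eqP; lia.
have /cards1P [b' Eb] : #|In| == 1%N by apply/eqP; lia.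
rewrite Ea Eb !big_set1 in eL eP.
have : p b' < p a' by lra.
move/rk_lt; lia.
Qed.

End Pot.

Theorem lemma5 :
  exists C : nat,
  forall (R : realFieldType) (n : nat) (p : 'I_n -> R),
    (forall j, 0 < p j) ->
  forall (s : nat -> schedule n) (i : bool) (k : nat),
    (forall t, (t < k)%N -> improving_two_swap p (s t) (s t.+1)) ->
    (forall t, (t <= k)%N -> critical p (s t) i) ->
    (k <= C * n ^ 2)%N.
Proof.
exists 1%N => R n p hp s i k himp hcrit.
have H : forall t, (t <= k)%N -> (@Phi R n p i (s t) + t <= @Phi R n p i (s 0))%N.
  elim=> [|t IH] ht; first by rewrite addn0.
  have ht' : (t <= k)%N by apply: ltnW.
  have [hn hm] := himp t ht.
  have hl : load p (s t.+1) i < load p (s t) i.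
    by rewrite (hcrit _ ht) (hcrit _ ht').
  have := @step R n p i _ _ hp hn hl; have := IH ht'; lia.
have := H k (leqnn k); have := @Phi_le R n p i (s 0).
rewrite mul1n expnS expn1 => h1 h2; apply: leq_trans h1; apply: leq_trans h2; apply: leq_addl.
Qed.
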